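(* Let $R$ be an associative ring with anti-involution $a\mapsto\bar a$. Define $\tilde N:=\tilde N_e^{C_2}i_e^*(\underline R^{\mathrm{fix}})$ by $\tilde N(C_2/e)=R\otimes R^{\mathrm{op}}$ with Weyl action $a\otimes b\mapsto\bar b\otimes\bar a$, and $\tilde N(C_2/C_2)=(\mathbb Z\{R\}\oplus(R\otimes R^{\mathrm{op}})/C_2)/\mathrm{TR}$, where TR identifies $\{a+b\}\sim\{a\}+\{b\}+[a\otimes\bar b]$. With restriction $\mathrm{res}\{a\}=a\otimes\bar a$, $\mathrm{res}[a\otimes b]=a\otimes b+\bar b\otimes\bar a$, transfer $\mathrm{tr}(a\otimes b)=[a\otimes b]$, the usual ring structure on $R\otimes R^{\mathrm{op}}$ at $C_2/e$, and multiplication at $C_2/C_2$ given by \[\{a\}\{b\}=\{ab\},\quad\{a\}[b\otimes c]=[ab\otimes c\bar a],\quad[a\otimes b]\{c\}=[ac\otimes\bar cb],\quad[a\otimes b][c\otimes d]=[ac\otimes db]+[a\bar d\otimes\bar cb],\] and unit sending $1\in\underline A(C_2/C_2)=\mathbb Z[t]/(t^2-2t)$ to $\{1\}$, $t$ to $[1\otimes1]$, and $1\in\underline A(C_2/e)=\mathbb Z$ to $1\otimes1$, $\tilde N$ is a well-defined $C_2$-Mackey functor and an associative $C_2$-Green functor.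
   Context: $C_2=\{e,\tau\}$. A $C_2$-Mackey functor consists of abelian groups at $C_2/C_2$ and $C_2/e$, an involution (Weyl action) on the $C_2/e$-level, restriction $\mathrm{res}$ into the invariants and transfer $\mathrm{tr}$ with $\mathrm{tr}(\tau x)=\mathrm{tr}(x)$ and $\mathrm{res}\,\mathrm{tr}(x)=x+\tau x$. An associative $C_2$-Green functor is a monoid for the box product, i.e. associative unital rings at both levels such that $\mathrm{res}$ is a ring map, the Weyl action is by ring maps, and Frobenius reciprocity $\mathrm{tr}(x)y=\mathrm{tr}(x\,\mathrm{res}(y))$, $y\,\mathrm{tr}(x)=\mathrm{tr}(\mathrm{res}(y)x)$ holds. $\underline A$ is the $C_2$-Burnside Mackey functor, the unit for the box product. An anti-involution satisfies $\bar{\bar a}=a$, $\overline{ab}=\bar b\bar a$, $\overline{a+b}=\bar a+\bar b$. $\mathbb Z\{R\}$ is the free abelian group on symbols $\{a\}$, $a\in R$, and $[a\otimes b]$ denotes the class of $a\otimes b$ in the $C_2$-coinvariants of $R\otimes R^{\mathrm{op}}$. *)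

(* Defs.v *)
From HB Require Import structures.
From mathcomp Require Import all_boot all_algebra.
From mathcomp.multinomials Require Import freeg.
Set Implicit Arguments. Unset Strict Implicit. Unset Printing Implicit Defensive.
Import GRing.Theory.
Local Open Scope ring_scope.

Inductive span (V : zmodType) (S : V -> Prop) : V -> Prop :=
  | span0 : span S 0
  | spanS x : S x -> span S x
  | spanB x y : span S x -> span S y -> span S (x - y).

Definition modeq (V : zmodType) (S : V -> Prop) (x y : V) : Prop := span S (x - y).

(* Generic axioms of a C2-Mackey functor / associative C2-Green functor *)
(* whose two levels are given as quotients M1/E1 (level C2/C2) and      *)
(* M0/E0 (level C2/e), with operations given on representatives.        *)
Section GenericAxioms.
Variables (M1 M0 : zmodType) (E1 : M1 -> M1 -> Prop) (E0 : M0 -> M0 -> Prop).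
Variables (res : M1 -> M0) (tr : M0 -> M1) (w : M0 -> M0).

Definition C2_mackey : Prop :=
  ((forall x y, E1 x y -> E0 (res x) (res y)) /\
   (forall x y, E0 x y -> E1 (tr x) (tr y)) /\
   (forall x y, E0 x y -> E0 (w x) (w y))) /\
  ((forall x y, E0 (res (x + y)) (res x + res y)) /\
   (forall x y, E1 (tr (x + y)) (tr x + tr y)) /\
   (forall x y, E0 (w (x + y)) (w x + w y))) /\
  ((forall x, E0 (w (w x)) x) /\
   (forall x, E0 (w (res x)) (res x)) /\
   (forall x, E1 (tr (w x)) (tr x)) /\
   (forall x, E0 (res (tr x)) (x + w x))).

Variables (mul1 : M1 -> M1 -> M1) (mul0 : M0 -> M0 -> M0) (one1 : M1) (one0 : M0).

Definition C2_green : Prop :=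
  C2_mackey /\
  [/\
      (forall x x' y y', E1 x x' -> E1 y y' -> E1 (mul1 x y) (mul1 x' y')) /\
      (forall x x' y y', E0 x x' -> E0 y y' -> E0 (mul0 x y) (mul0 x' y')),
      [/\ (forall x y z, E1 (mul1 x (y + z)) (mul1 x y + mul1 x z)),
          (forall x y z, E1 (mul1 (x + y) z) (mul1 x z + mul1 y z)),
          (forall x y z, E1 (mul1 x (mul1 y z)) (mul1 (mul1 x y) z)),
          (forall x, E1 (mul1 one1 x) x) &
          (forall x, E1 (mul1 x one1) x)],
      [/\ (forall x y z, E0 (mul0 x (y + z)) (mul0 x y + mul0 x z)),
          (forall x y z, E0 (mul0 (x + y) z) (mul0 x z + mul0 y z)),
          (forall x y z, E0 (mul0 x (mul0 y z)) (mul0 (mul0 x y) z)),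
          (forall x, E0 (mul0 one0 x) x) &
          (forall x, E0 (mul0 x one0) x)],
      [/\ (forall x y, E0 (res (mul1 x y)) (mul0 (res x) (res y))),
          E0 (res one1) one0,
          (forall x y, E0 (w (mul0 x y)) (mul0 (w x) (w y))) &
          E0 (w one0) one0] &
      (forall x y, E1 (mul1 (tr x) y) (tr (mul0 x (res y)))) /\
      (forall x y, E1 (mul1 y (tr x)) (tr (mul0 (res y) x)))].
End GenericAxioms.

(* The Burnside Mackey functor A: A(C2/C2) = Z[t]/(t^2 - 2t), an element *)
(* m + n t being the pair (m, n); A(C2/e) = Z.                           *)
Definition burn1 := (int * int)%type.
Definition burn_res (u : burn1) : int := u.1 + 2 * u.2.
Definition burn_tr (k : int) : burn1 := (0, k).
Definition burn_mul (u v : burn1) : burn1 :=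
  (u.1 * v.1, u.1 * v.2 + u.2 * v.1 + 2 * u.2 * v.2).

Section Ntilde.
Variables (R : pzRingType) (bar : R -> R).

Definition anti_involution : Prop :=
  [/\ forall a, bar (bar a) = a,
      forall a b, bar (a * b) = bar b * bar a &
      forall a b, bar (a + b) = bar a + bar b].

(* free abelian group on symbols a (x) b : presents R (x) R^op *)
Definition Pe := {freeg (R * R)%type / int}.
Definition tns (a b : R) : Pe := << (a, b) >>.
(* free abelian group on symbols {a} (inl a) and [a (x) b] (inr (a,b)) :
   presents (Z{R} (+) (R (x) R^op)/C2)/TR *)
Definition P1 := {freeg (R + R * R)%type / int}.
Definition brc (a : R) : P1 := << inl a >>.
Definition sqr (a b : R) : P1 := << inr (a, b) >>.

Definition rel_e (x : Pe) : Prop :=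
  (exists a a' b, x = tns (a + a') b - tns a b - tns a' b) \/
  (exists a b b', x = tns a (b + b') - tns a b - tns a b').

Definition rel_C2 (x : P1) : Prop :=
  [\/ (exists a a' b, x = sqr (a + a') b - sqr a b - sqr a' b),
      (exists a b b', x = sqr a (b + b') - sqr a b - sqr a b'),
      (exists a b, x = sqr a b - sqr (bar b) (bar a)) |
      (exists a b, x = brc (a + b) - brc a - brc b - sqr a (bar b))].

Definition Ee : Pe -> Pe -> Prop := modeq rel_e.
Definition E1 : P1 -> P1 -> Prop := modeq rel_C2.

Definition Nweyl : Pe -> Pe := fglift (fun p : R * R => tns (bar p.2) (bar p.1)).
Definition Nres : P1 -> Pe :=
  fglift (fun g : (R + R * R)%type => match g with
           | inl a => tns a (bar a)
           | inr (a, b) => tns a b + tns (bar b) (bar a)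
           end).
Definition Ntr : Pe -> P1 := fglift (fun p : R * R => sqr p.1 p.2).

Definition Nmul0 (x y : Pe) : Pe :=
  fglift (fun p : R * R =>
    fglift (fun q : R * R => tns (p.1 * q.1) (q.2 * p.2)) y) x.

Definition mul1_gen (g h : (R + R * R)%type) : P1 :=
  match g, h with
  | inl a, inl b => brc (a * b)
  | inl a, inr (b, c) => sqr (a * b) (c * bar a)
  | inr (a, b), inl c => sqr (a * c) (bar c * b)
  | inr (a, b), inr (c, d) => sqr (a * c) (d * b) + sqr (a * bar d) (bar c * b)
  end.
Definition Nmul1 (x y : P1) : P1 :=
  fglift (fun g => fglift (fun h => mul1_gen g h) y) x.

Definition None1 : P1 := brc 1.
Definition None0 : Pe := tns 1 1.

Definition eta1 (u : burn1) : P1 := u.1 *: brc 1 + u.2 *: sqr 1 1.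
Definition eta0 (k : int) : Pe := k *: tns 1 1.

Definition unit_ok : Prop :=
  ((forall u, Ee (Nres (eta1 u)) (eta0 (burn_res u))) /\
   (forall k, E1 (Ntr (eta0 k)) (eta1 (burn_tr k))) /\
   (forall k, Ee (Nweyl (eta0 k)) (eta0 k))) /\
  ((forall u v, E1 (eta1 (burn_mul u v)) (Nmul1 (eta1 u) (eta1 v))) /\
   (forall k l, Ee (eta0 (k * l)) (Nmul0 (eta0 k) (eta0 l)))) /\
  (E1 (eta1 (1, 0)) None1 /\ Ee (eta0 1) None0).
End Ntilde.

(* Main.v *)
Require Import Defs.
From HB Require Import structures.
From mathcomp Require Import all_boot all_algebra.
From mathcomp.multinomials Require Import freeg.
From mathcomp.algebra_tactics Require Import ring.
Set Implicit Arguments. Unset Strict Implicit. Unset Printing Implicit Defensive.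
Import GRing.Theory.
Local Open Scope ring_scope.

Local Notation span := Defs.span.
Local Notation span0 := Defs.span0.
Local Notation spanS := Defs.spanS.
Local Notation spanB := Defs.spanB.

Section Span.
Variables (V W : zmodType) (S : V -> Prop) (T : W -> Prop).

Lemma spanN x : span S x -> span S (- x).
Proof. by move=> h; rewrite -sub0r; apply: spanB => //; apply: span0. Qed.
Lemma spanD x y : span S x -> span S y -> span S (x + y).
Proof. by move=> hx hy; rewrite -(opprK y); apply: spanB => //; apply: spanN. Qed.

Lemma span_list (X : V) (l : seq ({r : V | S r} * int)) :
  X = \sum_(p <- l) (sval p.1) *~ p.2 -> span S X.
Proof.
move=> ->; elim: l => [|[[r hr] k] l IH]; first by rewrite big_nil; apply: span0.
rewrite big_cons /=; apply: spanD => //.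
have hs : span S r by apply: spanS.
case: k => n.
  rewrite -pmulrn; elim: n => [|n IHn]; first by rewrite mulr0n; apply: span0.
  by rewrite mulrS; apply: spanD.
rewrite NegzE mulrNz; apply: spanN; rewrite -pmulrn; elim: n.+1 => [|m IHm]; first by rewrite mulr0n; apply: span0.
by rewrite mulrS; apply: spanD.
Qed.

Lemma modeq_refl x : modeq S x x.
Proof. by rewrite /modeq subrr; apply: span0. Qed.
Lemma modeq_eq x y : x = y -> modeq S x y.
Proof. by move=> ->; apply: modeq_refl. Qed.

Lemma modeq_map (f : V -> W) : (forall x y, f (x - y) = f x - f y) ->
  (forall r, S r -> span T (f r)) -> forall x y, modeq S x y -> modeq T (f x) (f y).
Proof.
move=> fB hS x y; rewrite /modeq -fB; elim => [|r /hS //|u v _ hu _ hv].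
  by rewrite -(subrr 0) fB subrr; apply: span0.
by rewrite fB; apply: spanB.
Qed.

Lemma modeq_add2 (f g : V -> W) :
  (forall x y, f (x - y) = f x - f y) -> (forall x y, g (x - y) = g x - g y) ->
  forall x y, modeq T (f x) (g x) -> modeq T (f y) (g y) -> modeq T (f (x - y)) (g (x - y)).
Proof.
move=> fB gB x y hx hy; rewrite /modeq fB gB.
have -> : f x - f y - (g x - g y) = (f x - g x) - (f y - g y) by rewrite !opprB addrACA [RHS]addrACA [- f y - _]addrC.
by apply: spanB.
Qed.

End Span.

Notation "'[r' p , k ]" := (exist _ _ p, k%Z).
Section Gen.
Variable K : choiceType.
Implicit Types x y : {freeg K / int}.

Lemma fgl_B (M : lmodType int) (f : K -> M) x y : fglift f (x - y) = fglift f x - fglift f y.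
Proof. exact: lift_is_additive. Qed.

Lemma fgl_0 (M : lmodType int) (f : K -> M) : fglift f 0 = 0.
Proof. by rewrite -(subrr 0) fgl_B subrr. Qed.

Lemma fgl_N (M : lmodType int) (f : K -> M) x : fglift f (- x) = - fglift f x.
Proof. by rewrite -sub0r fgl_B fgl_0 sub0r. Qed.

Lemma fgl_D (M : lmodType int) (f : K -> M) x y : fglift f (x + y) = fglift f x + fglift f y.
Proof. by have := fgl_B f x (- y); rewrite opprK fgl_N opprK. Qed.

Lemma fgl_U (M : lmodType int) (f : K -> M) z : fglift f << z >> = f z.
Proof. by rewrite liftU scale1r. Qed.

Lemma fg_ind (P : {freeg K / int} -> Prop) :
  P 0 -> (forall x y, P x -> P y -> P (x - y)) -> (forall z, P << z >>) -> forall x, P x.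
Proof.
move=> P0 PB PU x; rewrite -(freeg_sumE x).
elim: (dom x) => [|z s IH]; first by rewrite big_nil.
rewrite big_cons.
have PN : forall u, P u -> P (- u) by move=> u Pu; rewrite -sub0r; apply: PB.
have PD : forall u v, P u -> P v -> P (u + v).
  by move=> u v Pu Pv; rewrite -(opprK v); apply: PB => //; apply: (PN).
apply: (PD) => //.
have -> : << coeff z x *g z >> = << z >> *~ coeff z x :> {freeg K / int} by rewrite freegU_mulz intz.
case: (coeff z x) => n.
  rewrite -pmulrn; elim: n => [|n IHn]; first by rewrite mulr0n.
  by rewrite mulrS; apply: (PD).
rewrite NegzE mulrNz; apply: (PN); rewrite -pmulrn; elim: n.+1 => [|m IHm]; first by rewrite mulr0n.
by rewrite mulrS; apply: (PD).
Qed.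
End Gen.

Section MulF.
Variables (K1 K2 : choiceType) (M : lmodType int) (m : K1 -> K2 -> M).
Definition mulF (x : {freeg K1 / int}) (y : {freeg K2 / int}) : M :=
  fglift (fun g => fglift (fun h => m g h) y) x.

Lemma mulF_Bl x x' y : mulF (x - x') y = mulF x y - mulF x' y.
Proof. exact: fgl_B. Qed.
Lemma mulF_Br x y y' : mulF x (y - y') = mulF x y - mulF x y'.
Proof.
elim/fg_ind: x => [|x1 x2 h1 h2|g].
- by rewrite /mulF !fgl_0 subrr.
- rewrite !mulF_Bl h1 h2; set a := mulF x1 y; set b := mulF x1 y'; set c := mulF x2 y; set d := mulF x2 y'.
  by rewrite !opprB addrACA [RHS]addrACA [- b - _]addrC.
- by rewrite /mulF !fgl_U fgl_B.
Qed.
Lemma mulF_0l y : mulF 0 y = 0. Proof. exact: fgl_0. Qed.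
Lemma mulF_0r x : mulF x 0 = 0. Proof. by rewrite -(subrr 0) mulF_Br subrr. Qed.
Lemma mulF_Dl x x' y : mulF (x + x') y = mulF x y + mulF x' y.
Proof. exact: fgl_D. Qed.
Lemma mulF_Dr x y y' : mulF x (y + y') = mulF x y + mulF x y'.
Proof. by have := mulF_Br x y (- y'); rewrite opprK -(sub0r y') mulF_Br mulF_0r sub0r opprK. Qed.
Lemma mulF_U g h : mulF << g >> << h >> = m g h.
Proof. by rewrite /mulF !fgl_U. Qed.
End MulF.


Section Ind.
Variables (K : choiceType) (W : zmodType).
Implicit Types f g : {freeg K / int} -> W.
Lemma f0 f : (forall x y, f (x - y) = f x - f y) -> f 0 = 0.
Proof. by move=> fB; have := fB 0 0; rewrite !subrr. Qed.
Lemma ind_eq f g : (forall x y, f (x - y) = f x - f y) -> (forall x y, g (x - y) = g x - g y) ->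
  (forall z, f << z >> = g << z >>) -> forall x, f x = g x.
Proof.
move=> fB gB hz; elim/fg_ind => [|x y hx hy|z]; last exact: hz.
  by rewrite !f0.
by rewrite fB gB hx hy.
Qed.
Lemma ind_mod (T : W -> Prop) f g : (forall x y, f (x - y) = f x - f y) -> (forall x y, g (x - y) = g x - g y) ->
  (forall z, modeq T (f << z >>) (g << z >>)) -> forall x, modeq T (f x) (g x).
Proof.
move=> fB gB hz; elim/fg_ind => [|x y hx hy|z]; last exact: hz.
  by rewrite !f0 //; apply: modeq_refl.
exact: modeq_add2.
Qed.
Lemma ind_span (T : W -> Prop) f : (forall x y, f (x - y) = f x - f y) ->
  (forall z, span T (f << z >>)) -> forall x, span T (f x).
Proof.
move=> fB hz; apply: (@fg_ind _ (fun x => span T (f x))) => [|x y hx hy|z]; last exact: hz.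
  by rewrite f0 //; apply: span0.
by rewrite fB; apply: spanB.
Qed.
End Ind.

Lemma modeq_trans (V : zmodType) (S : V -> Prop) x y z : modeq S x y -> modeq S y z -> modeq S x z.
Proof.
rewrite /modeq => h1 h2; have -> : x - z = (x - y) + (y - z) by rewrite addrA subrK.
exact: spanD.
Qed.

Lemma addMz (V W : zmodType) (f : V -> W) : (forall x y, f (x - y) = f x - f y) ->
  forall x k, f (x *~ k) = f x *~ k.
Proof.
move=> fB x k.
have f0' : f 0 = 0 by have := fB 0 0; rewrite !subrr.
have fN : forall u, f (- u) = - f u by move=> u; rewrite -sub0r fB f0' sub0r.
have fD : forall u v, f (u + v) = f u + f v by move=> u v; have := fB u (- v); rewrite opprK fN opprK.
case: k => n.
  rewrite -!pmulrn; elim: n => [|n IH]; first by rewrite !mulr0n.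
  by rewrite !mulrS fD IH.
rewrite !NegzE !mulrNz fN; congr (- _); rewrite -!pmulrn; elim: n.+1 => [|m IH]; first by rewrite !mulr0n.
by rewrite !mulrS fD IH.
Qed.

Lemma scz (K : choiceType) (k : int) (v : {freeg K / int}) : k *: v = v *~ k.
Proof. by rewrite -scaler_int intz. Qed.

Ltac fgsolve := rewrite ?big_cons ?big_nil /=; apply/eqP/freeg_eqP => w;
  rewrite /tns /brc /sqr ?(coeffD, coeffB, coeffN, raddfMz, coeffU, coeff0); ring.

Section Main.
Variables (R : pzRingType) (bar : R -> R).
Hypothesis hbar : anti_involution bar.

Lemma barK (a : R) : bar (bar a) = a. Proof. by case: hbar. Qed.
Lemma barM (a b : R) : bar (a * b) = bar b * bar a. Proof. by case: hbar. Qed.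
Lemma barD (a b : R) : bar (a + b) = bar a + bar b. Proof. by case: hbar. Qed.
Lemma bar1 : bar 1 = 1.
Proof. by have := barM (bar 1) 1; rewrite mulr1 !barK mulr1 => /esym. Qed.

Lemma relE1 (a a' b : R) : rel_e (tns (a + a') b - tns a b - tns a' b).
Proof. by left; exists a, a', b. Qed.
Lemma relE2 (a b b' : R) : rel_e (tns a (b + b') - tns a b - tns a b').
Proof. by right; exists a, b, b'. Qed.
Lemma relA (a a' b : R) : rel_C2 bar (sqr (a + a') b - sqr a b - sqr a' b).
Proof. by constructor 1; exists a, a', b. Qed.
Lemma relB (a b b' : R) : rel_C2 bar (sqr a (b + b') - sqr a b - sqr a b').
Proof. by constructor 2; exists a, b, b'. Qed.
Lemma relC (a b : R) : rel_C2 bar (sqr a b - sqr (bar b) (bar a)).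
Proof. by constructor 3; exists a, b. Qed.
Lemma relT (a b : R) : rel_C2 bar (brc (a + b) - brc a - brc b - sqr a (bar b)).
Proof. by constructor 4; exists a, b. Qed.

Lemma Nres_brc (a : R) : Nres bar (brc a) = tns a (bar a). Proof. exact: fgl_U. Qed.
Lemma Nres_sqr (a b : R) : Nres bar (sqr a b) = tns a b + tns (bar b) (bar a). Proof. exact: fgl_U. Qed.
Lemma Ntr_tns (a b : R) : Ntr (tns a b) = sqr a b. Proof. exact: fgl_U. Qed.
Lemma Nweyl_tns (a b : R) : Nweyl bar (tns a b) = tns (bar b) (bar a). Proof. exact: fgl_U. Qed.
Lemma NresB (x y : P1 R) : Nres bar (x - y) = Nres bar x - Nres bar y. Proof. exact: fgl_B. Qed.
Lemma NtrB (x y : Pe R) : @Ntr R (x - y) = Ntr x - Ntr y. Proof. exact: fgl_B. Qed.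
Lemma NweylB (x y : Pe R) : Nweyl bar (x - y) = Nweyl bar x - Nweyl bar y. Proof. exact: fgl_B. Qed.

Lemma NresD (x y : P1 R) : Nres bar (x + y) = Nres bar x + Nres bar y. Proof. exact: fgl_D. Qed.
Lemma NtrD (x y : Pe R) : @Ntr R (x + y) = Ntr x + Ntr y. Proof. exact: fgl_D. Qed.
Lemma NweylD (x y : Pe R) : Nweyl bar (x + y) = Nweyl bar x + Nweyl bar y. Proof. exact: fgl_D. Qed.

Lemma res_wd (x y : P1 R) : E1 bar x y -> Ee (Nres bar x) (Nres bar y).
Proof.
apply: modeq_map; first exact: NresB.
move=> r [[a [a' [b ->]]]|[a [b [b' ->]]]|[a [b ->]]|[a [b ->]]]; rewrite !NresB ?Nres_sqr ?Nres_brc ?barD ?barK.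
- apply: (span_list (l := [:: [r relE1 a a' b, 1]; [r relE2 (bar b) (bar a) (bar a'), 1]])); fgsolve.
- apply: (span_list (l := [:: [r relE2 a b b', 1]; [r relE1 (bar b) (bar b') (bar a), 1]])); fgsolve.
- apply: (span_list (l := [::])); fgsolve.
- apply: (span_list (l := [:: [r relE1 a b (bar a + bar b), 1]; [r relE2 a (bar a) (bar b), 1]; [r relE2 b (bar a) (bar b), 1]])); fgsolve.
Qed.

Lemma tr_wd (x y : Pe R) : Ee x y -> E1 bar (Ntr x) (Ntr y).
Proof.
apply: modeq_map; first exact: NtrB.
move=> r [[a [a' [b ->]]]|[a [b [b' ->]]]]; rewrite !NtrB !Ntr_tns.
- by apply: spanS; apply: relA.
- by apply: spanS; apply: relB.
Qed.

Lemma w_wd (x y : Pe R) : Ee x y -> Ee (Nweyl bar x) (Nweyl bar y).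
Proof.
apply: modeq_map; first exact: NweylB.
move=> r [[a [a' [b ->]]]|[a [b [b' ->]]]]; rewrite !NweylB !Nweyl_tns barD.
- by apply: spanS; apply: relE2.
- by apply: spanS; apply: relE1.
Qed.

Lemma ww (x : Pe R) : Nweyl bar (Nweyl bar x) = x.
Proof.
apply: (ind_eq (f := fun x => Nweyl bar (Nweyl bar x)) (g := id)) => //.
  by move=> u v; rewrite !NweylB.
by case=> a b; rewrite -/(tns a b) !Nweyl_tns !barK.
Qed.

Lemma wres (x : P1 R) : Nweyl bar (Nres bar x) = Nres bar x.
Proof.
apply: (ind_eq (f := fun x => Nweyl bar (Nres bar x)) (g := Nres bar)).
- by move=> u v; rewrite NresB NweylB.
- exact: NresB.
case=> [a|[a b]].
  by rewrite -/(brc a) Nres_brc Nweyl_tns barK.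
rewrite -/(sqr a b) Nres_sqr NweylD.
by rewrite !Nweyl_tns !barK; fgsolve.
Qed.

Lemma trw (x : Pe R) : E1 bar (Ntr (Nweyl bar x)) (Ntr x).
Proof.
apply: (ind_mod (f := fun x => Ntr (Nweyl bar x)) (g := @Ntr R)).
- by move=> u v; rewrite NweylB NtrB.
- exact: NtrB.
case=> a b; rewrite -/(tns a b) Nweyl_tns !Ntr_tns /modeq.
by apply: (span_list (l := [:: [r relC a b, -1]])); fgsolve.
Qed.

Lemma restr (x : Pe R) : Nres bar (Ntr x) = x + Nweyl bar x.
Proof.
apply: (ind_eq (f := fun x => Nres bar (Ntr x)) (g := fun x => x + Nweyl bar x)).
- by move=> u v; rewrite NtrB NresB.
- by move=> u v; rewrite NweylB opprD addrACA.
by case=> a b; rewrite -/(tns a b) Nweyl_tns Ntr_tns Nres_sqr.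
Qed.

Lemma M1_Bl (x x' y : P1 R) : Nmul1 bar (x - x') y = Nmul1 bar x y - Nmul1 bar x' y.
Proof. exact: mulF_Bl. Qed.
Lemma M1_Br (x y y' : P1 R) : Nmul1 bar x (y - y') = Nmul1 bar x y - Nmul1 bar x y'.
Proof. exact: mulF_Br. Qed.
Lemma M1_Dl (x x' y : P1 R) : Nmul1 bar (x + x') y = Nmul1 bar x y + Nmul1 bar x' y.
Proof. exact: mulF_Dl. Qed.
Lemma M1_Dr (x y y' : P1 R) : Nmul1 bar x (y + y') = Nmul1 bar x y + Nmul1 bar x y'.
Proof. exact: mulF_Dr. Qed.
Lemma M1_bb (a b : R) : Nmul1 bar (brc a) (brc b) = brc (a * b).
Proof. exact: (mulF_U (mul1_gen bar)). Qed.
Lemma M1_bs (a b c : R) : Nmul1 bar (brc a) (sqr b c) = sqr (a * b) (c * bar a).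
Proof. exact: (mulF_U (mul1_gen bar)). Qed.
Lemma M1_sb (a b c : R) : Nmul1 bar (sqr a b) (brc c) = sqr (a * c) (bar c * b).
Proof. exact: (mulF_U (mul1_gen bar)). Qed.
Lemma M1_ss (a b c d : R) : Nmul1 bar (sqr a b) (sqr c d) = sqr (a * c) (d * b) + sqr (a * bar d) (bar c * b).
Proof. exact: (mulF_U (mul1_gen bar)). Qed.

Lemma M0_Bl (x x' y : Pe R) : Nmul0 (x - x') y = Nmul0 x y - Nmul0 x' y.
Proof. exact: mulF_Bl. Qed.
Lemma M0_Br (x y y' : Pe R) : Nmul0 x (y - y') = Nmul0 x y - Nmul0 x y'.
Proof. exact: mulF_Br. Qed.
Lemma M0_Dl (x x' y : Pe R) : Nmul0 (x + x') y = Nmul0 x y + Nmul0 x' y.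
Proof. exact: mulF_Dl. Qed.
Lemma M0_Dr (x y y' : Pe R) : Nmul0 x (y + y') = Nmul0 x y + Nmul0 x y'.
Proof. exact: mulF_Dr. Qed.
Lemma M0_tt (a b c d : R) : Nmul0 (tns a b) (tns c d) = tns (a * c) (d * b).
Proof. exact: (mulF_U (fun p q : R * R => tns (p.1 * q.1) (q.2 * p.2))). Qed.

Ltac rnorm := rewrite ?(barD, barM, barK, bar1, mulrDr, mulrDl, mulrA, mulr1, mul1r).
Ltac sl l := apply: (span_list (l := l)); rewrite ?big_cons ?big_nil /=; rnorm; fgsolve.

Lemma mul1_wdl (x x' y : P1 R) : E1 bar x x' -> E1 bar (Nmul1 bar x y) (Nmul1 bar x' y).
Proof.
move=> h; apply: (modeq_map (f := fun x => Nmul1 bar x y)) h => [u v|r hr]; first exact: M1_Bl.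
apply: (ind_span (f := fun y => Nmul1 bar r y)) => [u v|]; first exact: M1_Br.
case: hr => [[a [a' [b ->]]]|[a [b [b' ->]]]|[a [b ->]]|[a [b ->]]] [c|[c d]];
  rewrite !M1_Bl ?(M1_bb, M1_bs, M1_sb, M1_ss).
- sl [:: [r relA (a*c) (a'*c) (bar c*b), 1]].
- sl [:: [r relA (a*c) (a'*c) (d*b), 1]; [r relA (a*bar d) (a'*bar d) (bar c*b), 1]].
- sl [:: [r relB (a*c) (bar c*b) (bar c*b'), 1]].
- sl [:: [r relB (a*c) (d*b) (d*b'), 1]; [r relB (a*bar d) (bar c*b) (bar c*b'), 1]].
- sl [:: [r relC (a*c) (bar c*b), 1]].
- sl [:: [r relC (a*c) (d*b), 1]; [r relC (a*bar d) (bar c*b), 1]].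
- sl [:: [r relT (a*c) (b*c), 1]].
- sl [:: [r relA (a*c) (b*c) (d*bar a + d*bar b), 1]; [r relB (a*c) (d*bar a) (d*bar b), 1];
        [r relB (b*c) (d*bar a) (d*bar b), 1]; [r relC (b*c) (d*bar a), 1]].
Qed.

Lemma mul1_wdr (x y y' : P1 R) : E1 bar y y' -> E1 bar (Nmul1 bar x y) (Nmul1 bar x y').
Proof.
move=> h; apply: (modeq_map (f := fun y => Nmul1 bar x y)) h => [u v|r hr]; first exact: M1_Br.
apply: (ind_span (f := fun x => Nmul1 bar x r)) => [u v|]; first exact: M1_Bl.
case: hr => [[a [a' [b ->]]]|[a [b [b' ->]]]|[a [b ->]]|[a [b ->]]] [c|[c d]];
  rewrite !M1_Br ?(M1_bb, M1_bs, M1_sb, M1_ss).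
- sl [:: [r relA (c*a) (c*a') (b*bar c), 1]].
- sl [:: [r relA (c*a) (c*a') (b*d), 1]; [r relB (c*bar b) (bar a*d) (bar a'*d), 1]].
- sl [:: [r relB (c*a) (b*bar c) (b'*bar c), 1]].
- sl [:: [r relB (c*a) (b*d) (b'*d), 1]; [r relA (c*bar b) (c*bar b') (bar a*d), 1]].
- sl [:: [r relC (c*a) (b*bar c), 1]].
- sl (@nil ({r : P1 R | rel_C2 bar r} * int)).
- sl [:: [r relT (c*a) (c*b), 1]].
- sl [:: [r relA (c*a) (c*b) (bar a*d + bar b*d), 1]; [r relB (c*a) (bar a*d) (bar b*d), 1];
        [r relB (c*b) (bar a*d) (bar b*d), 1]].
Qed.

Lemma mul0_wdl (x x' y : Pe R) : Ee x x' -> Ee (Nmul0 x y) (Nmul0 x' y).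
Proof.
move=> h; apply: (modeq_map (f := fun x => Nmul0 x y)) h => [u v|r hr]; first exact: M0_Bl.
apply: (ind_span (f := fun y => Nmul0 r y)) => [u v|]; first exact: M0_Br.
case: hr => [[a [a' [b ->]]]|[a [b [b' ->]]]] [c d]; rewrite !M0_Bl !M0_tt.
- sl [:: [r relE1 (a*c) (a'*c) (d*b), 1]].
- sl [:: [r relE2 (a*c) (d*b) (d*b'), 1]].
Qed.

Lemma mul0_wdr (x y y' : Pe R) : Ee y y' -> Ee (Nmul0 x y) (Nmul0 x y').
Proof.
move=> h; apply: (modeq_map (f := fun y => Nmul0 x y)) h => [u v|r hr]; first exact: M0_Br.
apply: (ind_span (f := fun x => Nmul0 x r)) => [u v|]; first exact: M0_Bl.
case: hr => [[a [a' [b ->]]]|[a [b [b' ->]]]] [c d]; rewrite !M0_Br !M0_tt.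
- sl [:: [r relE1 (c*a) (c*a') (b*d), 1]].
- sl [:: [r relE2 (c*a) (b*d) (b'*d), 1]].
Qed.

Ltac mexp := rewrite ?(M1_bb, M1_bs, M1_sb, M1_ss, M1_Dl, M1_Dr, M0_tt, M0_Dl, M0_Dr,
   Nres_brc, Nres_sqr, NresD, Ntr_tns, NtrD, Nweyl_tns, NweylD).

Lemma assoc1 (x y z : P1 R) : Nmul1 bar x (Nmul1 bar y z) = Nmul1 bar (Nmul1 bar x y) z.
Proof.
move: x; apply: (ind_eq (f := fun x => Nmul1 bar x (Nmul1 bar y z)) (g := fun x => Nmul1 bar (Nmul1 bar x y) z)).
- by move=> u v; rewrite M1_Bl.
- by move=> u v; rewrite !M1_Bl.
move=> g; move: y; apply: (ind_eq (f := fun y => Nmul1 bar << g >> (Nmul1 bar y z)) (g := fun y => Nmul1 bar (Nmul1 bar << g >> y) z)).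
- by move=> u v; rewrite M1_Bl M1_Br.
- by move=> u v; rewrite M1_Br M1_Bl.
move=> h; move: z; apply: (ind_eq (f := fun z => Nmul1 bar << g >> (Nmul1 bar << h >> z)) (g := fun z => Nmul1 bar (Nmul1 bar << g >> << h >>) z)).
- by move=> u v; rewrite !M1_Br.
- by move=> u v; rewrite !M1_Br.
move=> k; case: g => [a|[a b]]; case: h => [c|[c d]]; case: k => [e|[e f]]; mexp; rnorm; fgsolve.
Qed.

Lemma assoc0 (x y z : Pe R) : Nmul0 x (Nmul0 y z) = Nmul0 (Nmul0 x y) z.
Proof.
move: x; apply: (ind_eq (f := fun x => Nmul0 x (Nmul0 y z)) (g := fun x => Nmul0 (Nmul0 x y) z)).
- by move=> u v; rewrite M0_Bl.
- by move=> u v; rewrite !M0_Bl.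
move=> g; move: y; apply: (ind_eq (f := fun y => Nmul0 << g >> (Nmul0 y z)) (g := fun y => Nmul0 (Nmul0 << g >> y) z)).
- by move=> u v; rewrite M0_Bl M0_Br.
- by move=> u v; rewrite M0_Br M0_Bl.
move=> h; move: z; apply: (ind_eq (f := fun z => Nmul0 << g >> (Nmul0 << h >> z)) (g := fun z => Nmul0 (Nmul0 << g >> << h >>) z)).
- by move=> u v; rewrite !M0_Br.
- by move=> u v; rewrite !M0_Br.
move=> k; case: g => [a b]; case: h => [c d]; case: k => [e f]; mexp; rnorm; fgsolve.
Qed.

Lemma unitl1 (x : P1 R) : Nmul1 bar (None1 R) x = x.
Proof.
apply: (ind_eq (f := Nmul1 bar (None1 R)) (g := id)) => //; first by move=> u v; rewrite M1_Br.
by case=> [a|[a b]]; rewrite /None1; mexp; rnorm.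
Qed.
Lemma unitr1 (x : P1 R) : Nmul1 bar x (None1 R) = x.
Proof.
apply: (ind_eq (f := fun x => Nmul1 bar x (None1 R)) (g := id)) => //; first by move=> u v; rewrite M1_Bl.
by case=> [a|[a b]]; rewrite /None1; mexp; rnorm.
Qed.
Lemma unitl0 (x : Pe R) : Nmul0 (None0 R) x = x.
Proof.
apply: (ind_eq (f := Nmul0 (None0 R)) (g := id)) => //; first by move=> u v; rewrite M0_Br.
by case=> a b; rewrite /None0; mexp; rnorm.
Qed.
Lemma unitr0 (x : Pe R) : Nmul0 x (None0 R) = x.
Proof.
apply: (ind_eq (f := fun x => Nmul0 x (None0 R)) (g := id)) => //; first by move=> u v; rewrite M0_Bl.
by case=> a b; rewrite /None0; mexp; rnorm.
Qed.

Lemma resM (x y : P1 R) : Nres bar (Nmul1 bar x y) = Nmul0 (Nres bar x) (Nres bar y).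
Proof.
move: x; apply: (ind_eq (f := fun x => Nres bar (Nmul1 bar x y)) (g := fun x => Nmul0 (Nres bar x) (Nres bar y))).
- by move=> u v; rewrite M1_Bl NresB.
- by move=> u v; rewrite NresB M0_Bl.
move=> g; move: y; apply: (ind_eq (f := fun y => Nres bar (Nmul1 bar << g >> y)) (g := fun y => Nmul0 (Nres bar << g >>) (Nres bar y))).
- by move=> u v; rewrite M1_Br NresB.
- by move=> u v; rewrite NresB M0_Br.
move=> h; case: g => [a|[a b]]; case: h => [c|[c d]]; mexp; rnorm; fgsolve.
Qed.

Lemma wM (x y : Pe R) : Nweyl bar (Nmul0 x y) = Nmul0 (Nweyl bar x) (Nweyl bar y).
Proof.
move: x; apply: (ind_eq (f := fun x => Nweyl bar (Nmul0 x y)) (g := fun x => Nmul0 (Nweyl bar x) (Nweyl bar y))).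
- by move=> u v; rewrite M0_Bl NweylB.
- by move=> u v; rewrite NweylB M0_Bl.
move=> g; move: y; apply: (ind_eq (f := fun y => Nweyl bar (Nmul0 << g >> y)) (g := fun y => Nmul0 (Nweyl bar << g >>) (Nweyl bar y))).
- by move=> u v; rewrite M0_Br NweylB.
- by move=> u v; rewrite NweylB M0_Br.
move=> h; case: g => [a b]; case: h => [c d]; mexp; rnorm; fgsolve.
Qed.

Lemma frobl (x : Pe R) (y : P1 R) : E1 bar (Nmul1 bar (Ntr x) y) (Ntr (Nmul0 x (Nres bar y))).
Proof.
move: x; apply: (ind_mod (f := fun x => Nmul1 bar (Ntr x) y) (g := fun x => Ntr (Nmul0 x (Nres bar y)))).
- by move=> u v; rewrite NtrB M1_Bl.
- by move=> u v; rewrite M0_Bl NtrB.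
move=> g; move: y; apply: (ind_mod (f := fun y => Nmul1 bar (Ntr << g >>) y) (g := fun y => Ntr (Nmul0 << g >> (Nres bar y)))).
- by move=> u v; rewrite M1_Br.
- by move=> u v; rewrite NresB M0_Br NtrB.
move=> h; apply: modeq_eq; case: g => [a b]; case: h => [c|[c d]]; mexp; rnorm; fgsolve.
Qed.

Lemma frobr (x : Pe R) (y : P1 R) : E1 bar (Nmul1 bar y (Ntr x)) (Ntr (Nmul0 (Nres bar y) x)).
Proof.
move: x; apply: (ind_mod (f := fun x => Nmul1 bar y (Ntr x)) (g := fun x => Ntr (Nmul0 (Nres bar y) x))).
- by move=> u v; rewrite NtrB M1_Br.
- by move=> u v; rewrite M0_Br NtrB.
move=> g; move: y; apply: (ind_mod (f := fun y => Nmul1 bar y (Ntr << g >>)) (g := fun y => Ntr (Nmul0 (Nres bar y) << g >>))).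
- by move=> u v; rewrite M1_Bl.
- by move=> u v; rewrite NresB M0_Bl NtrB.
move=> h; rewrite /modeq; case: g => [a b]; case: h => [c|[c d]]; mexp.
- sl (@nil ({r : P1 R | rel_C2 bar r} * int)).
- sl [:: [r relC (bar d * a) (b * bar c), -1]].
Qed.

Lemma NresMz (x : P1 R) k : Nres bar (x *~ k) = Nres bar x *~ k. Proof. exact: (addMz (@NresB)). Qed.
Lemma NtrMz (x : Pe R) k : Ntr (x *~ k) = Ntr x *~ k. Proof. exact: (addMz (@NtrB)). Qed.
Lemma NweylMz (x : Pe R) k : Nweyl bar (x *~ k) = Nweyl bar x *~ k. Proof. exact: (addMz (@NweylB)). Qed.
Lemma M1_Mzl (x y : P1 R) k : Nmul1 bar (x *~ k) y = Nmul1 bar x y *~ k.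
Proof. exact: (addMz (f := fun x => Nmul1 bar x y) (fun u v => M1_Bl u v y)). Qed.
Lemma M1_Mzr (x y : P1 R) k : Nmul1 bar x (y *~ k) = Nmul1 bar x y *~ k.
Proof. exact: (addMz (f := fun y => Nmul1 bar x y) (fun u v => M1_Br x u v)). Qed.
Lemma M0_Mzl (x y : Pe R) k : Nmul0 (x *~ k) y = Nmul0 x y *~ k.
Proof. exact: (addMz (f := fun x => Nmul0 x y) (fun u v => M0_Bl u v y)). Qed.
Lemma M0_Mzr (x y : Pe R) k : Nmul0 x (y *~ k) = Nmul0 x y *~ k.
Proof. exact: (addMz (f := fun y => Nmul0 x y) (fun u v => M0_Br x u v)). Qed.

Ltac uexp := rewrite /eta1 /eta0 /burn_res /burn_tr /burn_mul /None1 /None0 /= ?scz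
  ?(NresMz, NtrMz, NweylMz, M1_Mzl, M1_Mzr, M0_Mzl, M0_Mzr, NresD, NtrD, NweylD, M1_Dl, M1_Dr, M0_Dl, M0_Dr);
  mexp; rnorm.

Lemma unit_okP : unit_ok bar.
Proof.
split; [split; [|split]|split; [split|split]].
- by move=> u; apply: modeq_eq; uexp; fgsolve.
- by move=> k; apply: modeq_eq; uexp; fgsolve.
- by move=> k; apply: modeq_eq; uexp; fgsolve.
- by move=> u v; apply: modeq_eq; uexp; fgsolve.
- by move=> k l; apply: modeq_eq; uexp; fgsolve.
- by apply: modeq_eq; uexp; fgsolve.
- by apply: modeq_eq; uexp; fgsolve.
Qed.
End Main.

Theorem mainTheorem16 (R : pzRingType) (bar : R -> R) :
  anti_involution bar ->
  C2_green (E1 bar) (@Ee R) (Nres bar) (@Ntr R) (Nweyl bar)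
           (Nmul1 bar) (@Nmul0 R) (@None1 R) (@None0 R)
  /\ unit_ok bar.
Proof.
move=> h; split; last exact: unit_okP.
split.
  split; [split; [|split]|split; [split; [|split]|split; [|split; [|split]]]].
  - by move=> x y; apply: res_wd.
  - by move=> x y; apply: tr_wd.
  - by move=> x y; apply: w_wd.
  - by move=> x y; apply: modeq_eq; rewrite NresD.
  - by move=> x y; apply: modeq_eq; rewrite NtrD.
  - by move=> x y; apply: modeq_eq; rewrite NweylD.
  - by move=> x; apply: modeq_eq; rewrite ww.
  - by move=> x; apply: modeq_eq; rewrite wres.
  - by move=> x; apply: trw.
  - by move=> x; apply: modeq_eq; rewrite restr.
split.
- split.
    move=> x x' y y' h1 h2; apply: (modeq_trans (y := Nmul1 bar x' y)).
      exact: mul1_wdl.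
    exact: mul1_wdr.
  move=> x x' y y' h1 h2; apply: (modeq_trans (y := Nmul0 x' y)).
    exact: mul0_wdl.
  exact: mul0_wdr.
- split.
  + by move=> x y z; apply: modeq_eq; rewrite M1_Dr.
  + by move=> x y z; apply: modeq_eq; rewrite M1_Dl.
  + by move=> x y z; apply: modeq_eq; rewrite assoc1.
  + by move=> x; apply: modeq_eq; rewrite unitl1.
  + by move=> x; apply: modeq_eq; rewrite unitr1.
- split.
  + by move=> x y z; apply: modeq_eq; rewrite M0_Dr.
  + by move=> x y z; apply: modeq_eq; rewrite M0_Dl.
  + by move=> x y z; apply: modeq_eq; rewrite assoc0.
  + by move=> x; apply: modeq_eq; rewrite unitl0.
  + by move=> x; apply: modeq_eq; rewrite unitr0.
- split.
  + by move=> x y; apply: modeq_eq; rewrite resM.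
  + by apply: modeq_eq; rewrite /None1 Nres_brc bar1.
  + by move=> x y; apply: modeq_eq; rewrite wM.
  + by apply: modeq_eq; rewrite /None0 Nweyl_tns bar1.
- split.
  + by move=> x y; apply: frobl.
  + by move=> x y; apply: frobr.
Qed.
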